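(* Let $\mathbf{A}\in\mathbb{R}^{n\times d}$ and $\mathbf{B}\in\mathbb{R}^{n\times d_B}$. For each integer $k\in[0,\mathrm{rank}(\mathbf{B})]$, $$P_k(x;\mathbf{A},\mathbf{B})=\frac{(-1)^k}{(d_B-k)!}\partial_y^{d_B-k}\det\left[\begin{pmatrix}x\mathbf{I}_d&\mathbf{0}\\ \mathbf{0}&y\mathbf{I}_{d_B}\end{pmatrix}-\begin{pmatrix}\mathbf{A}^{\rm T}\\ \mathbf{B}^{\rm T}\end{pmatrix}\begin{pmatrix}\mathbf{A}&\mathbf{B}\end{pmatrix}\right]\Bigg|_{y=0}$$ and $$P_k(x;\mathbf{A},\mathbf{B})=\frac{(-1)^k}{k!}x^{d-n+k}\,\partial_y^k\det[x\mathbf{I}_n-\mathbf{A}\mathbf{A}^{\rm T}-y\mathbf{B}\mathbf{B}^{\rm T}]\Big|_{y=0}.$$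
   Context: $\mathbf{B}_{:,S}$ is the column submatrix of $\mathbf{B}$ indexed by $S$, $\mathbf{M}^\dagger$ is the Moore–Penrose pseudoinverse with $\mathbf{B}_{:,S}^\dagger:=(\mathbf{B}_{:,S})^\dagger$; empty determinants equal $1$ and $\mathbf{B}_{:,\emptyset}\mathbf{B}_{:,\emptyset}^\dagger$ is the zero matrix. Define $$P_k(x;\mathbf{A},\mathbf{B})=\sum_{S\subset[d_B],|S|=k}\det[(\mathbf{B}_{:,S})^{\rm T}\mathbf{B}_{:,S}]\det[x\mathbf{I}_d-\mathbf{A}^{\rm T}(\mathbf{I}_n-\mathbf{B}_{:,S}\mathbf{B}_{:,S}^\dagger)\mathbf{A}].$$ *)

(* Defs.v *)
From Stdlib Require Import ClassicalEpsilon.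
From HB Require Import structures.
From mathcomp Require Import all_boot all_order all_algebra.
From mathcomp Require Import reals.
Set Implicit Arguments. Unset Strict Implicit. Unset Printing Implicit Defensive.
Import Order.TTheory GRing.Theory Num.Theory.
Local Open Scope ring_scope.

(* The four Penrose conditions characterising the Moore--Penrose pseudoinverse
   (over the reals the adjoint is the transpose). *)
Definition penrose {R : realType} {m n : nat}
  (M : 'M[R]_(m, n)) (X : 'M[R]_(n, m)) : Prop :=
  [/\ M *m X *m M = M, X *m M *m X = X,
      (M *m X)^T = M *m X & (X *m M)^T = X *m M].

Definition mp_pinv {R : realType} {m n : nat} (M : 'M[R]_(m, n)) : 'M[R]_(n, m) :=
  epsilon (inhabits 0) (penrose M).

(* Column submatrix B_{:,S}, columns taken in increasing order of index. *)
Definition colS {R : realType} {n dB : nat} (B : 'M[R]_(n, dB)) (S : {set 'I_dB})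
  : 'M[R]_(n, #|S|) :=
  colsub (fun i : 'I_#|S| => enum_val i) B.

Definition Pk {R : realType} {n d dB : nat} (k : nat)
  (A : 'M[R]_(n, d)) (B : 'M[R]_(n, dB)) (x : R) : R :=
  \sum_(S : {set 'I_dB} | #|S| == k)
     \det ((colS B S)^T *m colS B S) *
     \det (x%:M - A^T *m (1%:M - colS B S *m mp_pinv (colS B S)) *m A).

Definition detBlockY {R : realType} {n d dB : nat}
  (A : 'M[R]_(n, d)) (B : 'M[R]_(n, dB)) (x : R) : {poly R} :=
  \det (block_mx (x%:P)%:M 0 0 ('X)%:M
        - map_mx polyC (col_mx A^T B^T *m row_mx A B)).

Definition detNY {R : realType} {n d dB : nat}
  (A : 'M[R]_(n, d)) (B : 'M[R]_(n, dB)) (x : R) : {poly R} :=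
  \det (map_mx polyC (x%:M - A *m A^T) - 'X *: map_mx polyC (B *m B^T)).

(* Main.v *)
From Stdlib Require Import ClassicalEpsilon.
Require Import Defs.
From HB Require Import structures.
From mathcomp Require Import all_boot all_order all_algebra.
From mathcomp Require Import perm.
From mathcomp Require Import reals.
From mathcomp Require Import zify.
Set Implicit Arguments. Unset Strict Implicit. Unset Printing Implicit Defensive.
Import Order.TTheory GRing.Theory Num.Theory.
Local Open Scope ring_scope.

Lemma det_mxsub_perm (T : comNzRingType) q (s : 'S_q) (X : 'M[T]_q) :
  \det (mxsub s s X) = \det X.
Proof.
have -> : mxsub s s X = row_perm s (col_perm s X) by apply/matrixP => i j; rewrite !mxE.
rewrite row_permE col_permE !det_mulmx !det_perm odd_permV.
case: (odd_perm s) => /=.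
  by rewrite expr1 mulrN1 mulN1r opprK.
by rewrite expr0 mulr1 mul1r.
Qed.

Lemma det_mxsub_inj (T : comNzRingType) p q q' (M : 'M[T]_p)
  (f : 'I_q -> 'I_p) (g : 'I_q' -> 'I_p) :
  injective f -> injective g -> (forall y, (y \in codom f) = (y \in codom g)) ->
  \det (mxsub f f M) = \det (mxsub g g M).
Proof.
move=> fi gi fg.
have eq : q = q'.
  by rewrite -(card_ord q) -(card_ord q') -(card_codom fi) -(card_codom gi); apply: eq_card.
subst q'.
pose s0 i := odflt i [pick j | g j == f i].
have gs i : g (s0 i) = f i.
  rewrite /s0; case: pickP => [j /eqP //|/= H].
  have : f i \in codom g by rewrite -fg codom_f.
  by case/codomP => j Hj; move: (H j); rewrite Hj eqxx.
have s0i : injective s0 by move=> i j Hij; apply: fi; rewrite -!gs Hij.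
pose s := perm s0i.
have -> : mxsub f f M = mxsub s s (mxsub g g M).
  by apply/matrixP => i j; rewrite !mxE !permE !gs.
exact: det_mxsub_perm.
Qed.

Definition unitrows (T : comNzRingType) p (M : 'M[T]_p) (Z : {set 'I_p}) : 'M[T]_p :=
  \matrix_(i, j) if i \in Z then (i == j)%:R else M i j.

Lemma det_unitrows (T : comNzRingType) p (M : 'M[T]_p) (Z : {set 'I_p}) :
  \det (unitrows M Z) =
  \det (mxsub (enum_val : 'I_#|~: Z| -> 'I_p) (enum_val : 'I_#|~: Z| -> 'I_p) M).
Proof.
pose h (i : 'I_(#|~: Z| + #|Z|)) : 'I_p :=
  match split i with inl j => enum_val j | inr j => enum_val j end.
have hi : injective h.
  move=> i j; rewrite /h; case: split_ordP => i' ->; case: split_ordP => j' -> //.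
  - by move/enum_val_inj ->.
  - by move=> E; move: (enum_valP i') (enum_valP j'); rewrite E inE => /negP.
  - by move=> E; move: (enum_valP i') (enum_valP j'); rewrite E inE => ? /negP.
  - by move/enum_val_inj ->.
have -> : \det (unitrows M Z) = \det (mxsub h h (unitrows M Z)).
  rewrite (@det_mxsub_inj _ _ _ _ _ h id) ?mxsub_id //.
  move=> y; rewrite codom_f.
  apply/codomP; case: (boolP (y \in Z)) => yZ.
    exists (rshift #|~: Z| (enum_rank_in yZ y)).
    by rewrite /h (unsplitK (inr (enum_rank_in yZ y))) enum_rankK_in.
  have yZ' : y \in ~: Z by rewrite inE.
  exists (lshift #|Z| (enum_rank_in yZ' y)).
  by rewrite /h (unsplitK (inl (enum_rank_in yZ' y))) enum_rankK_in.
have -> : mxsub h h (unitrows M Z) =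
   block_mx (mxsub (enum_val : 'I_#|~: Z| -> 'I_p) (enum_val : 'I_#|~: Z| -> 'I_p) M)
     (mxsub (enum_val : 'I_#|~: Z| -> 'I_p) (enum_val : 'I_#|Z| -> 'I_p) M) 0 1%:M.
  apply/matrixP => i j; rewrite mxE /h.
  case: split_ordP => i' ->; case: split_ordP => j' ->;
    rewrite ?block_mxEul ?block_mxEur ?block_mxEdl ?block_mxEdr !mxE.
  - by move: (enum_valP i'); rewrite inE => /negPf ->.
  - by move: (enum_valP i'); rewrite inE => /negPf ->.
  - rewrite (enum_valP i'); case: eqP => // E.
    by move: (enum_valP j'); rewrite -E inE (enum_valP i').
  - by rewrite (enum_valP i') (inj_eq enum_val_inj).
by rewrite det_ublock det1 mulr1.
Qed.

Lemma split_lsh m n (i : 'I_m) : split (lshift n i) = inl i.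
Proof. exact: (unsplitK (inl i)). Qed.
Lemma split_rsh m n (i : 'I_n) : split (rshift m i) = inr i.
Proof. exact: (unsplitK (inr i)). Qed.

Definition lowmx (T : comNzRingType) d m (N W : 'M[T]_(d + m)) (a b : T) : 'M[T]_(d + m) :=
  \matrix_(i, j) match split i with inl _ => N i j | inr _ => a * N i j + b * W i j end.

Definition selmx (T : comNzRingType) d m (N W : 'M[T]_(d + m)) (f : {ffun 'I_m -> bool}) : 'M[T]_(d + m) :=
  \matrix_(i, j) match split i with inl _ => N i j | inr k => if f k then N i j else W i j end.

Lemma det_lowmx (T : comNzRingType) d m (N W : 'M[T]_(d + m)) (a b : T) :
  \det (lowmx N W a b) = \sum_(f : {ffun 'I_m -> bool})
     (\prod_(j < m) (if f j then a else b)) * \det (selmx N W f).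
Proof.
rewrite /determinant.
transitivity (\sum_(s : 'S_(d + m)) \sum_(f : {ffun 'I_m -> bool})
   (\prod_(j < m) (if f j then a else b)) *
     ((-1) ^+ s * \prod_i selmx N W f i (s i))); last first.
  rewrite exchange_big; apply: eq_bigr => f _; by rewrite mulr_sumr.
apply: eq_bigr => s _; rewrite /lowmx /selmx.
under [RHS]eq_bigr do rewrite mulrCA.
rewrite -mulr_sumr; congr (_ * _).
rewrite big_split_ord /=.
under [in RHS]eq_bigr do rewrite big_split_ord /=.
under eq_bigr do rewrite mxE split_lsh.
under [X in _ * X = _]eq_bigr do rewrite mxE split_rsh.
have -> : \prod_(i < m) (a * N (rshift d i) (s (rshift d i)) + b * W (rshift d i) (s (rshift d i)))
   = \prod_(i < m) \sum_(t : bool) (if t then a * N (rshift d i) (s (rshift d i))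
                                      else b * W (rshift d i) (s (rshift d i))).
  by apply: eq_bigr => i _; rewrite big_bool.
rewrite bigA_distr_bigA mulr_sumr; apply: eq_bigr => f _.
under [X in _ = _ * (X * _)]eq_bigr do rewrite mxE split_lsh.
under [X in _ = _ * (_ * X)]eq_bigr do rewrite mxE split_rsh.
rewrite mulrCA; congr (_ * _).
rewrite -big_split /=; apply: eq_bigr => i _.
by case: (f i).
Qed.

Lemma mem_codom_ev (T : finType) (A : {set T}) y :
  (y \in codom (enum_val : 'I_#|A| -> T)) = (y \in A).
Proof.
apply/idP/idP => [/codomP [i ->]|yA]; first exact: enum_valP.
by apply/codomP; exists (enum_rank_in yA y); rewrite enum_rankK_in.
Qed.

Definition fS d m (S : {set 'I_m}) (i : 'I_(d + #|S|)) : 'I_(d + m) :=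
  match split i with inl j => lshift m j | inr k => rshift d (enum_val k) end.

Lemma fS_inj d m (S : {set 'I_m}) : injective (@fS d m S).
Proof.
move=> i j; rewrite /fS; case: split_ordP => i' ->; case: split_ordP => j' -> //.
- by move/lshift_inj ->.
- by move/eqP; rewrite eq_lrshift.
- by move/eqP; rewrite eq_rlshift.
- by move/rshift_inj/enum_val_inj ->.
Qed.

Lemma det_selmx (T : comNzRingType) d m (N : 'M[T]_(d + m)) (S : {set 'I_m}) :
  \det (selmx N 1%:M [ffun j => j \in S]) = \det (mxsub (@fS d m S) (@fS d m S) N).
Proof.
pose Z := [set i : 'I_(d + m) | match split i with inl _ => false | inr k => k \notin S end].
have -> : selmx N 1%:M [ffun j => j \in S] = unitrows N Z.
  apply/matrixP => i j; rewrite !mxE inE.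
  case: split_ordP => i' _ //; rewrite ffunE.
  by case: (i' \in S).

rewrite det_unitrows; apply: det_mxsub_inj; [exact: enum_val_inj|exact: fS_inj|].
move=> y; rewrite mem_codom_ev !inE.
apply/idP/idP.
  case: split_ordP => [j ->|k ->] H.
    by apply/codomP; exists (lshift #|S| j); rewrite /fS split_lsh.
  move: H; rewrite negbK => kS.
  by apply/codomP; exists (rshift d (enum_rank_in kS k)); rewrite /fS split_rsh enum_rankK_in.
case/codomP => i ->; rewrite /fS; case: (split_ordP i) => [j _|k _].
  by rewrite !split_lsh.
by rewrite !split_rsh enum_valP.
Qed.

Lemma sylvester (T : comNzRingType) p q (x : T) (C : 'M[T]_(p, q)) (D : 'M[T]_(q, p)) :
  x ^+ q * \det (x%:M - C *m D) = x ^+ p * \det (x%:M - D *m C).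
Proof.
pose M := block_mx (x%:M : 'M_p) C D (1%:M : 'M_q).
have E1 : \det M = \det (x%:M - C *m D).
  have : block_mx 1%:M (- C) 0 1%:M *m M = block_mx (x%:M - C *m D) 0 D 1%:M.
    rewrite mulmx_block !mul1mx !mul0mx !add0r mulmx1 mulNmx.
    by rewrite subrr.
  move/(congr1 determinant); rewrite det_mulmx det_ublock det_lblock !det1 mul1r mulr1.
  by rewrite mul1r.
have E2 : x ^+ q * \det M = x ^+ p * \det (x%:M - D *m C).
  have : block_mx 1%:M 0 (- D) x%:M *m M = block_mx x%:M C 0 (x%:M - D *m C).
    rewrite mulmx_block !mul1mx !mul0mx !addr0 mulNmx mul_scalar_mx mul_mx_scalar.
    by rewrite addNr mulmx1 mulNmx addrC.
  move/(congr1 determinant); rewrite det_mulmx det_lblock det_ublock !det1 !det_scalar mul1r.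
  by move=> ->.
by rewrite -E1 E2.
Qed.

Lemma pinv_full (R : realType) n s (M : 'M[R]_(n, s)) :
  M^T *m M \in unitmx -> mp_pinv M = invmx (M^T *m M) *m M^T.
Proof.
move=> U.
have V : invmx (M^T *m M) *m (M^T *m M) = 1%:M := mulVmx U.
have sym : (invmx (M^T *m M))^T = invmx (M^T *m M).
  by rewrite trmx_inv trmx_mul trmxK.
have P : penrose M (invmx (M^T *m M) *m M^T).
  split.
  - by rewrite -mulmxA -(mulmxA (invmx _)) V mulmx1.
  - by rewrite -(mulmxA _ M^T M) V mul1mx.
  - by rewrite !trmx_mul trmxK sym mulmxA.
  - by rewrite -mulmxA V trmx1.
have := epsilon_spec (inhabits 0) (penrose M) (ex_intro _ _ P).
rewrite -/(mp_pinv M); set X := mp_pinv M; case=> H1 _ H3 _.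
have H : M^T *m M *m X = M^T.
  by rewrite -mulmxA -H3 -trmx_mul H1.
by rewrite -[X]mul1mx -V -mulmxA H.
Qed.

Definition Nmx (R : realType) n d m (A : 'M[R]_(n, d)) (B : 'M[R]_(n, m)) (x : R) : 'M[R]_(d + m) :=
  block_mx (x%:M : 'M_d) 0 0 (0 : 'M_m) - col_mx A^T B^T *m row_mx A B.

Definition Kmx (R : realType) n d m (A : 'M[R]_(n, d)) (B : 'M[R]_(n, m)) (x : R) (S : {set 'I_m}) :=
  mxsub (@fS d m S) (@fS d m S) (Nmx A B x).

Lemma mxsubB (T : comNzRingType) p q p' q' (f : 'I_p' -> 'I_p) (g : 'I_q' -> 'I_q) (P Q : 'M[T]_(p, q)) :
  mxsub f g (P - Q) = mxsub f g P - mxsub f g Q.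
Proof. by apply/matrixP => i j; rewrite !mxE. Qed.

Lemma Kmx_block (R : realType) n d m (A : 'M[R]_(n, d)) (B : 'M[R]_(n, m)) (x : R) S :
  Kmx A B x S = block_mx (x%:M - A^T *m A) (- (A^T *m colS B S))
                         (- ((colS B S)^T *m A)) (- ((colS B S)^T *m colS B S)).
Proof.
rewrite /Kmx /Nmx mxsubB mxsub_mul.
have E1 : mxsub (@fS d m S) (@fS d m S) (block_mx (x%:M : 'M_d) 0 0 (0 : 'M_m))
          = block_mx (x%:M : 'M_d) 0 0 (0 : 'M_#|S|).
  apply/matrixP => i j; rewrite mxE /fS.
  case: (split_ordP i) => i' ->; case: (split_ordP j) => j' ->;
  by rewrite ?split_lsh ?split_rsh ?block_mxEul ?block_mxEur ?block_mxEdl ?block_mxEdr ?mxE.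
have E2 : rowsub (@fS d m S) (col_mx A^T B^T) = col_mx A^T (colS B S)^T.
  apply/matrixP => i j; rewrite mxE /fS.
  case: (split_ordP i) => i' ->;
  by rewrite ?split_lsh ?split_rsh ?col_mxEu ?col_mxEd ?mxE.
have E3 : colsub (@fS d m S) (row_mx A B) = row_mx A (colS B S).
  apply/matrixP => i j; rewrite mxE /fS.
  case: (split_ordP j) => j' ->;
  by rewrite ?split_lsh ?split_rsh ?row_mxEl ?row_mxEr ?mxE.
rewrite E1 E2 E3 mul_col_row opp_block_mx add_block_mx !add0r.
by [].
Qed.

Lemma sign2 (T : comNzRingType) k : (-1) ^+ k * (-1) ^+ k = 1 :> T.
Proof. by rewrite -exprMn mulrNN mulr1 expr1n. Qed.

Lemma rv_tr0 (R : realType) n (u : 'rV[R]_n) : u *m u^T = 0 -> u = 0.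
Proof.
move=> H; have := congr1 (fun M : 'M[R]_1 => M 0 0) H; rewrite !mxE => /eqP.
under eq_bigr do rewrite mxE -expr2.
rewrite psumr_eq0; last by move=> i _; rewrite sqr_ge0.
move/allP => Hall.
apply/matrixP => i j; rewrite (ord1 i) mxE.
have := Hall j (mem_index_enum j); rewrite implyTb sqrf_eq0 => /eqP ->.
by [].
Qed.

Lemma schur_term (R : realType) n d m (A : 'M[R]_(n, d)) (B : 'M[R]_(n, m)) (x : R) S :
  \det ((colS B S)^T *m colS B S) *
  \det (x%:M - A^T *m (1%:M - colS B S *m mp_pinv (colS B S)) *m A)
  = (-1) ^+ #|S| * \det (Kmx A B x S).
Proof.
rewrite Kmx_block; set BS := colS B S.
case: (boolP (BS^T *m BS \in unitmx)) => U.
  rewrite pinv_full //; set Mi := invmx (BS^T *m BS).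
  have V : Mi *m (BS^T *m BS) = 1%:M := mulVmx U.
  pose E := block_mx 1%:M (- (A^T *m BS *m Mi)) 0 (1%:M : 'M_#|S|).
  have : E *m block_mx (x%:M - A^T *m A) (- (A^T *m BS))
                         (- (BS^T *m A)) (- (BS^T *m BS))
         = block_mx (x%:M - A^T *m (1%:M - BS *m (Mi *m BS^T)) *m A) 0
                    (- (BS^T *m A)) (- (BS^T *m BS)).
    rewrite mulmx_block !mul1mx !mul0mx !add0r.
    congr (block_mx _ _ _ _).
      rewrite mulmxN mulNmx opprK mulmxBr mulmx1 mulmxBl opprB addrA.
      by rewrite !mulmxA addrAC.
    by rewrite mulmxN mulNmx opprK -!mulmxA V mulmx1 addNr.
  move/(congr1 determinant); rewrite det_mulmx det_ublock !det1 mul1r mul1r det_lblock.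
  move=> ->; rewrite -(scaleN1r (BS^T *m BS)) detZ.
  by rewrite [RHS]mulrCA [X in _ = _ * X]mulrA sign2 mul1r mulrC.
have D0 : \det (BS^T *m BS) = 0.
  by apply/eqP; move: U; rewrite unitmxE unitfE negbK.
rewrite D0 mul0r; apply/esym/eqP; rewrite mulf_eq0; apply/orP; right.
move/eqP/det0P: D0 => [v nv0 Hv].
have Hu : v *m BS^T = 0.
  apply: rv_tr0; rewrite trmx_mul trmxK mulmxA -(mulmxA v) Hv mul0mx.
  by [].
apply/det0P; exists (row_mx 0 v).
  by rewrite row_mx_eq0 negb_and nv0 orbT.
rewrite mul_row_block !mul0mx !add0r !mulmxN mulmxA Hu mul0mx Hv oppr0.
by rewrite oppr0 row_mx0.
Qed.

Lemma Pk_K (R : realType) n d m (A : 'M[R]_(n, d)) (B : 'M[R]_(n, m)) (x : R) k :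
  Pk k A B x = \sum_(S : {set 'I_m} | #|S| == k) (-1) ^+ k * \det (Kmx A B x S).
Proof. by apply: eq_bigr => S /eqP <-; rewrite schur_term. Qed.

Lemma det_lowmx_K (R : realType) n d m (A : 'M[R]_(n, d)) (B : 'M[R]_(n, m)) (x : R) (a b : {poly R}) :
  \det (lowmx (map_mx polyC (Nmx A B x)) 1%:M a b) =
  \sum_(S : {set 'I_m}) (\prod_(j < m) (if j \in S then a else b)) * (\det (Kmx A B x S))%:P.
Proof.
rewrite det_lowmx (reindex (fun S : {set 'I_m} => [ffun j => j \in S])) /=; last first.
  exists (fun f : {ffun 'I_m -> bool} => [set j | f j]).
    by move=> S _; apply/setP => j; rewrite inE ffunE.
  by move=> f _; apply/ffunP => j; rewrite ffunE inE.
apply: eq_bigr => S _; congr (_ * _).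
  by apply: eq_bigr => j _; rewrite ffunE.
rewrite det_selmx -det_map_mx; congr (\det _).
by apply/matrixP => i j; rewrite !mxE.
Qed.

Lemma Gp_split (R : realType) n d m (A : 'M[R]_(n, d)) (B : 'M[R]_(n, m)) :
  map_mx polyC (col_mx A^T B^T *m row_mx A B) =
  col_mx (map_mx polyC (A^T *m row_mx A B)) (map_mx polyC (B^T *m row_mx A B)).
Proof. by rewrite mul_col_mx map_col_mx. Qed.

Lemma detBlockY_low (R : realType) n d m (A : 'M[R]_(n, d)) (B : 'M[R]_(n, m)) (x : R) :
  detBlockY A B x = \det (lowmx (map_mx polyC (Nmx A B x)) 1%:M 1 'X).
Proof.
rewrite /detBlockY /Nmx map_mxB Gp_split.
set P1 := map_mx polyC (A^T *m row_mx A B).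
set P2 := map_mx polyC (B^T *m row_mx A B).
congr (\det _); apply/matrixP => i j.
case: (split_ordP i) => i' ->; case: (split_ordP j) => j' ->;
rewrite /lowmx ?mxE ?split_lsh ?split_rsh
   ?block_mxEul ?block_mxEur ?block_mxEdl ?block_mxEdr ?col_mxEu ?col_mxEd ?mxE.
all: rewrite ?split_lsh ?split_rsh ?mxE ?raddfB /= ?polyC0 ?polyCMn ?eq_lrshift ?eq_rlshift ?eq_shift ?mul1r.
all: by rewrite ?mulr0 ?addr0 // sub0r addrC mulr_natr.
Qed.

Lemma detNY_low (R : realType) n d m (A : 'M[R]_(n, d)) (B : 'M[R]_(n, m)) (x : R) :
  (x%:P) ^+ (d + m) * detNY A B x =
  (x%:P) ^+ n * \det (lowmx (map_mx polyC (Nmx A B x)) 1%:M 'X x%:P).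
Proof.
pose C := map_mx polyC (row_mx A B).
pose D := col_mx (map_mx polyC A^T) ('X *: map_mx polyC B^T).
have E1 : detNY A B x = \det ((x%:P)%:M - C *m D).
  rewrite /detNY /C /D map_row_mx mul_row_col -scalemxAr -!map_mxM map_mxB map_scalar_mx.
  by rewrite opprD addrA.
have E2 : (x%:P)%:M - D *m C = lowmx (map_mx polyC (Nmx A B x)) 1%:M 'X x%:P.
  rewrite /D /C /Nmx map_mxB Gp_split mul_col_mx -scalemxAl -!map_mxM.
  apply/matrixP => i j.
  case: (split_ordP i) => i' ->; case: (split_ordP j) => j' ->;
  rewrite /lowmx ?mxE ?split_lsh ?split_rsh
     ?block_mxEul ?block_mxEur ?block_mxEdl ?block_mxEdr ?col_mxEu ?col_mxEd ?mxE.
  all: rewrite ?split_lsh ?split_rsh ?mxE ?raddfB /= ?polyC0 ?polyCMn ?eq_lrshift ?eq_rlshift ?eq_shift ?mul1r.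
  all: rewrite ?mulr0n ?mulr0 ?addr0 ?sub0r ?mulrN //.
  all: try by rewrite addrC mulr_natr.
have E3 : (x%:P)^+(d+m) * detNY A B x = (x%:P)^+n * \det ((x%:P)%:M - D *m C).
  by rewrite E1 sylvester.
by rewrite E3 E2 /Nmx map_mxB.
Qed.

Lemma prod_if (T : comNzRingType) m (S : {set 'I_m}) (a b : T) :
  \prod_(j < m) (if j \in S then a else b) = a ^+ #|S| * b ^+ (m - #|S|).
Proof.
rewrite (bigID (fun j => j \in S)) /=.
rewrite (eq_bigr (fun=> a)); last by move=> j ->.
rewrite [X in _ * X](eq_bigr (fun=> b)); last by move=> j /negPf ->.
rewrite !prodr_const; congr (_ * _ ^+ _).
have -> : #|(fun i : 'I_m => i \notin S)| = #|[predC S]| by apply: eq_card.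
apply/eqP; rewrite -(eqn_add2l #|S|) (cardC S) card_ord subnKC //.
by have := max_card S; rewrite card_ord.
Qed.

Lemma derivn0 (R : realType) (p : {poly R}) j : (p^`(j)).[0] = p`_j * (j`!)%:R.
Proof. by rewrite horner_coef0 coef_derivn addn0 ffactnn mulr_natr. Qed.

Lemma cardS_le m (S : {set 'I_m}) : (#|S| <= m)%N.
Proof. by have := max_card S; rewrite card_ord. Qed.

Lemma part1 (R : realType) (n d dB : nat)
  (A : 'M[R]_(n, d)) (B : 'M[R]_(n, dB)) (k : nat) (x : R) :
  (k <= dB)%N ->
     Pk k A B x = (-1) ^+ k / ((dB - k)`!)%:R
                  * ((detBlockY A B x)^`(dB - k)).[0].
Proof.
move=> kle.
rewrite derivn0 detBlockY_low det_lowmx_K coef_sum.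
have f0 : ((dB - k)`!)%:R != 0 :> R by rewrite pnatr_eq0 -lt0n fact_gt0.
rewrite -mulrA (mulrC _ ((dB - k)`!)%:R) mulKf // Pk_K -mulr_sumr.
congr (_ * _); rewrite (big_mkcond (fun S : {set 'I_dB} => #|S| == k)) /=.
apply: eq_bigr => S _.
rewrite prod_if expr1n mul1r mulrC coefCM coefXn.
have Hs := cardS_le S.
have -> : (dB - k == dB - #|S|)%N = (#|S| == k).
  by apply/idP/idP => /eqP H; apply/eqP; lia.
by case: (#|S| == k); rewrite ?mulr1 ?mulr0.
Qed.

Lemma coef_term (R : realType) (a b : R) s k :
  (('X ^+ s * a%:P) * b%:P)`_k = a * b * (k == s)%:R.
Proof. by rewrite -mulrA -polyCM mulrC coefCM coefXn. Qed.

Lemma part2 (R : realType) (n d dB : nat)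
  (A : 'M[R]_(n, d)) (B : 'M[R]_(n, dB)) (k : nat) (x : R) :
  (k <= dB)%N -> x != 0 ->
     Pk k A B x = (-1) ^+ k / (k`!)%:R
                  * x ^ (d%:Z - n%:Z + k%:Z)
                  * ((detNY A B x)^`(k)).[0].
Proof.
move=> kle x0.
rewrite derivn0.
have f0 : (k`!)%:R != 0 :> R by rewrite pnatr_eq0 -lt0n fact_gt0.
set q := detNY A B x.
set c := \sum_(S : {set 'I_dB} | #|S| == k) \det (Kmx A B x S).
have Hq : x ^+ (d + dB) * q`_k = x ^+ (n + (dB - k)) * c.
  have := congr1 (fun p : {poly R} => p`_k) (detNY_low A B x).
  rewrite /= -polyC_exp coefCM => ->.
  rewrite det_lowmx_K -polyC_exp coefCM coef_sum exprD -mulrA; congr (_ * _).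
  rewrite /c mulr_sumr (big_mkcond (fun S : {set 'I_dB} => #|S| == k)) /=.
  apply: eq_bigr => S _.
  rewrite prod_if -polyC_exp coef_term eq_sym.
  case: eqP => [E|_]; last by rewrite ?mulr1 ?mulr0.
  by rewrite mulr1 [X in x ^+ (_ - X) * _ = _]E.
have Hz : x ^ (d%:Z - n%:Z + k%:Z) * x ^+ (n + (dB - k)) = x ^+ (d + dB).
  rewrite -[x ^+ (n + (dB - k))]/(x ^ ((n + (dB - k))%N : int)).
  rewrite -[x ^+ (d + dB)]/(x ^ ((d + dB)%N : int)) -expfzDr //.
  congr (x ^ _); lia.
rewrite Pk_K -mulr_sumr -/c -!mulrA; congr (_ * _).
rewrite (mulrC q`_k) mulrCA mulKf //.
apply: (mulfI (expf_neq0 (d + dB) x0)).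
by rewrite mulrCA Hq mulrA Hz.
Qed.

Unset Implicit Arguments.

Theorem proposition3p4 (R : realType) (n d dB : nat)
  (A : 'M[R]_(n, d)) (B : 'M[R]_(n, dB)) (k : nat) :
  (k <= \rank B)%N ->
  (forall x : R,
     Pk k A B x = (-1) ^+ k / ((dB - k)`!)%:R
                  * ((detBlockY A B x)^`(dB - k)).[0]) /\
  (forall x : R, x != 0 ->
     Pk k A B x = (-1) ^+ k / (k`!)%:R
                  * x ^ (d%:Z - n%:Z + k%:Z)
                  * ((detNY A B x)^`(k)).[0]).
Proof.
move=> kr.
have kle : (k <= dB)%N := leq_trans kr (rank_leq_col B).
split => x; first exact: part1.
by move=> x0; apply: part2.
Qed.
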